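(* Let $n\ge1$, let $V$ be a finite set of values, let $\psi_{iv}\in\mathbb{R}$ ($1\le i\le n$, $v\in V$), let $W=(w_{vv'})$ be a real $|V|\times|V|$ matrix, fix $\alpha\in V$ and an integer $k$. Consider the integer program $$\max_{z}\ \sum_{i,v}(\psi_{iv}+w_{\alpha v})z_{iv}\quad\text{s.t.}\quad \sum_i z_{iv}\le k\ \ (\forall v\ne\alpha),\quad \sum_i z_{i\alpha}=k,\quad \sum_v z_{iv}=1\ \ (\forall i),\quad z_{iv}\in\{0,1\}.$$ Its LP relaxation (replacing $z_{iv}\in\{0,1\}$ by $0\le z_{iv}\le 1$) is tight, i.e. it has an integral optimal solution, so its optimal value equals that of the integer program. *)

(* Defs.v *)
From HB Require Import structures.
From mathcomp Require Import all_boot all_order all_algebra.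
From mathcomp Require Export reals.
Set Implicit Arguments. Unset Strict Implicit. Unset Printing Implicit Defensive.
Import Order.TTheory GRing.Theory Num.Theory.
Local Open Scope ring_scope.

Definition lp_objective (R : realType) (n : nat) (V : finType)
  (psi : 'I_n -> V -> R) (w : V -> V -> R) (alpha : V) (z : 'I_n -> V -> R) : R :=
  \sum_(i < n) \sum_(v : V) (psi i v + w alpha v) * z i v.

Definition lp_feasible (R : realType) (n : nat) (V : finType)
  (alpha : V) (k : int) (z : 'I_n -> V -> R) : Prop :=
  [/\ forall v : V, v != alpha -> \sum_(i < n) z i v <= k%:~R,
      \sum_(i < n) z i alpha = k%:~R,
      forall i : 'I_n, \sum_(v : V) z i v = 1
    & forall (i : 'I_n) (v : V), 0 <= z i v <= 1].

Definition integral_sol (R : realType) (n : nat) (V : finType)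
  (z : 'I_n -> V -> R) : Prop :=
  forall (i : 'I_n) (v : V), z i v = 0 \/ z i v = 1.

Definition lp_optimal (R : realType) (n : nat) (V : finType)
  (psi : 'I_n -> V -> R) (w : V -> V -> R) (alpha : V) (k : int)
  (z : 'I_n -> V -> R) : Prop :=
  lp_feasible alpha k z /\
  forall z' : 'I_n -> V -> R, lp_feasible alpha k z' ->
    lp_objective psi w alpha z' <= lp_objective psi w alpha z.

(* Main.v *)
Require Import Defs.
From HB Require Import structures.
From mathcomp Require Import all_boot all_order all_algebra.
From mathcomp Require Import reals boolp zify lra.
Import Order.TTheory GRing.Theory Num.Theory.
Local Open Scope ring_scope.

Lemma int_not_frac (R : realType) (x : R) :
  x \is a Num.int -> ~~ ((0 < x) && (x < 1)).
Proof.
move=> /intrP[m ->]; rewrite ltr0z ltrz1; apply/negP => /andP[h1 h2]; lia.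
Qed.

Lemma nonfrac01 (R : realType) (x : R) :
  0 <= x <= 1 -> ~~ ((0 < x) && (x < 1)) -> x = 0 \/ x = 1.
Proof.
move=> /andP[h0 h1]; case: (ltrP 0 x) => hx /=; last first.
  by left; apply/eqP; rewrite eq_le hx h0.
rewrite -leNgt => h; by right; apply/eqP; rewrite eq_le h1 h.
Qed.

Lemma two_frac (R : realType) (T : finType) (g : T -> R) :
  (forall t, 0 <= g t <= 1) -> (\sum_t g t) \is a Num.int ->
  forall t0, (0 < g t0) && (g t0 < 1) ->
  exists t1, (t1 != t0) && ((0 < g t1) && (g t1 < 1)).
Proof.
move=> hb hs t0 ht0; apply/existsP; apply: contraT => /existsPn hn.
have hrest : \sum_(t | t != t0) g t \is a Num.int.
  apply: rpred_sum => t ht; have := hn t; rewrite ht /= => hnf.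
  by case: (@nonfrac01 R (g t) (hb t) hnf) => ->; rewrite ?int_num0 ?int_num1.
have := @int_not_frac R _ (rpredB hs hrest).
by rewrite (bigD1 t0) //= addrK ht0.
Qed.

Lemma card_sum_nat (T : finType) (P : pred T) :
  #|[set t | P t]| = (\sum_t (P t : nat))%N.
Proof.
rewrite -sum1_card big_mkcond; apply: eq_bigr => t _; rewrite inE; by case: (P t).
Qed.

Lemma card_sumT (T1 T2 : finType) (P : pred (T1 + T2)) :
  #|P| = (#|[pred x | P (inl x)]| + #|[pred y | P (inr y)]|)%N.
Proof. by rewrite -!sum1_card big_sumType. Qed.
Lemma exists_kernel (R : fieldType) (A B : finType) (P : {pred B})
  (f : B -> A -> R) : (#|P| < #|A|)%N ->
  exists x : A -> R, (exists a, x a != 0) /\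
    forall b, b \in P -> \sum_a f b a * x a = 0.
Proof.
move=> hlt.
pose M := \matrix_(i < #|A|, j < #|P|) f (enum_val j) (enum_val i).
have hk : kermx M != 0.
  rewrite -mxrank_eq0 mxrank_ker -lt0n subn_gt0.
  exact: leq_ltn_trans (rank_leq_col M) hlt.
have [i hi] : exists i, row i (kermx M) != 0.
  apply/existsP; move: hk; apply: contraNT; rewrite negb_exists => /forallP h.
  apply/eqP/row_matrixP => j; rewrite row0. have := h j. rewrite negbK. move/eqP. exact.
pose v := row i (kermx M).
have hv : v *m M = 0 by rewrite /v -row_mul mulmx_ker row0.
exists (fun a => v 0 (enum_rank a)); split.
  have [j hj] : exists j, v 0 j != 0.
    apply/existsP; move: hi; apply: contraNT; rewrite negb_exists => /forallP h.
    apply/eqP/rowP => j; by move: (h j); rewrite negbK !mxE => /eqP.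
  by exists (enum_val j); rewrite enum_valK.
move=> b hb.
have := congr1 (fun m : 'M[R]_(1,#|P|) => m 0 (enum_rank_in hb b)) hv.
rewrite !mxE => h0; rewrite -[RHS]h0.
rewrite [LHS](reindex (enum_val : 'I_#|A| -> A)) /=; last exact: onW_bij (@enum_val_bij A).
apply: eq_bigr => j _. rewrite !mxE enum_valK enum_rankK_in // mulrC //.
Qed.

Lemma sum_pair (R : realType) (I J : finType) (G : (I * J)%type -> R) :
  \sum_(p : (I * J)%type) G p = \sum_(i : I) \sum_(j : J) G (i, j).
Proof. by rewrite pair_big; apply: eq_bigr => [[]]. Qed.

Lemma sum_delta (R : realType) (T : finType) (a : T) (G : T -> R) :
  \sum_(t : T) (t == a)%:R * G t = G a.
Proof.
rewrite (bigD1 a) //= eqxx mul1r big1 ?addr0 // => t /negbTE ->; by rewrite mul0r.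
Qed.

Section LP.
Variables (R : realType) (n : nat) (V : finType) (alpha : V) (k : int)
  (c : 'I_n -> V -> R).

Definition feas (z : 'I_n -> V -> R) := lp_feasible alpha k z.
Definition obj (z : 'I_n -> V -> R) := \sum_(i < n) \sum_(v : V) c i v * z i v.
Definition frb (x : R) := (0 < x) && (x < 1).
Definition Fs (z : 'I_n -> V -> R) : {set 'I_n * V} := [set p | frb (z p.1 p.2)].
Definition cs (z : 'I_n -> V -> R) v := \sum_(i < n) z i v.
Definition NI (z : 'I_n -> V -> R) : {set V} := [set v | cs z v \isn't a Num.int].
Definition mu z := (#|Fs z| + #|NI z|)%N.
Definition dsum (d : 'I_n * V -> R) v := \sum_(i < n) d (i, v).
Definition dir (z : 'I_n -> V -> R) (d : 'I_n * V -> R) :=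
  [/\ forall p, p \notin Fs z -> d p = 0,
      forall i, \sum_(v : V) d (i, v) = 0,
      forall v, cs z v \is a Num.int -> dsum d v = 0
    & exists p, d p != 0].

Lemma dir_exists z : feas z -> Fs z != set0 -> exists d, dir z d.
Proof.
case=> hcol hal hrow hb hne.
set F := Fs z.
pose Rw := [set i | [exists v, (i, v) \in F]].
pose Cl := [set v | (cs z v \is a Num.int) && [exists i, (i, v) \in F]].
pose rc i := (\sum_(v : V) (((i, v) \in F) : nat))%N.
pose cc v := (\sum_(i < n) (((i, v) \in F) : nat))%N.
have hF1 : #|F| = (\sum_i rc i)%N.
  rewrite /rc pair_big /= -sum1_card big_mkcond /=; apply: eq_bigr => [[i v]] _.
  by case: (_ \in F).
have hF2 : #|F| = (\sum_v cc v)%N by rewrite hF1 /rc /cc exchange_big.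
have rowcnt : forall i, i \in Rw -> (2 <= rc i)%N.
  move=> i; rewrite inE => /existsP[v hv].
  have := @two_frac R V (fun v => z i v) (hb i) _ v.
  rewrite hrow int_num1 => /(_ isT); rewrite inE in hv => /(_ hv) [v1 /andP[hne1 hf1]].
  rewrite /rc -card_sum_nat; apply/card_gt1P; exists v, v1; rewrite !inE eq_sym hne1.
  by split.
have colcnt : forall v, v \in Cl -> (2 <= cc v)%N.
  move=> v; rewrite inE => /andP[hint /existsP[i hi]].
  have := @two_frac R 'I_n (fun i => z i v) (fun i => hb i v) hint i.
  rewrite inE in hi => /(_ hi) [i1 /andP[hne1 hf1]].
  rewrite /cc -card_sum_nat; apply/card_gt1P; exists i, i1; rewrite !inE eq_sym hne1.
  by split.
have hRw : (2 * #|Rw| <= #|F|)%N.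
  rewrite hF1 (bigID (fun i => i \in Rw)) /=.
  apply: leq_trans (leq_addr _ _).
  rewrite mulnC -sum_nat_const; exact: leq_sum.
have hCl : (2 * #|Cl| + (\sum_(v | v \notin Cl) cc v) <= #|F|)%N.
  rewrite hF2 [X in (_ <= X)%N](bigID (fun v => v \in Cl)) /=; apply: leq_add; last by [].
  rewrite mulnC -sum_nat_const; exact: leq_sum.
pose fcoef (b : ('I_n + V + ('I_n * V))%type) (p : 'I_n * V) : R :=
  match b with
  | inl (inl i) => (p.1 == i)%:R
  | inl (inr v) => (p.2 == v)%:R
  | inr q => (p == q)%:R end.
pose Pdr (dr : option V) : pred ('I_n + V + ('I_n * V))%type := fun b =>
  match b with
  | inl (inl i) => i \in Rw
  | inl (inr v) => (v \in Cl) && (Some v != dr)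
  | inr q => q \notin F end.
have cardP dr : #|Pdr dr| = (#|Rw| + #|[set v in Cl | Some v != dr]| + #|~: F|)%N.
  rewrite card_sumT card_sumT; congr (_ + _ + _)%N.
  - by apply: eq_card => i; rewrite /= !inE.
  - by apply: eq_card => q; rewrite /= !inE.
have hA : #|(('I_n * V)%type : finType)| = (#|F| + #|~: F|)%N by rewrite cardsC.
have [dr [hlt hdrop]] : exists dr, (#|Rw| + #|[set v in Cl | Some v != dr]| < #|F|)%N /\
    (forall v, Some v = dr -> forall p, p \in F -> p.2 \in Cl).
  case: (boolP [exists p in F, p.2 \notin Cl]) => hX.
  - exists None; split; last by [].
    have [p /andP[hpF hpC]] := existsP hX.
    have h1 : (1 <= \sum_(v | v \notin Cl) cc v)%N.
      rewrite (bigD1 p.2) //=; apply: leq_trans (leq_addr _ _).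
      rewrite /cc (bigD1 p.1) //= -surjective_pairing hpF; exact: leq_addr.
    have h2 : (#|[set v in Cl | Some v != None]| <= #|Cl|)%N.
      by apply: subset_leq_card; apply/subsetP => v; rewrite inE => /andP[].
    lia.
  - have [p hp] := set0Pn _ hne.
    have hallF : forall q, q \in F -> q.2 \in Cl.
      move=> q hq; move/existsPn: hX => /(_ q); rewrite hq /=; exact: negbNE.
    exists (Some p.2); split; last by move=> v _; exact: hallF.
    have h2 : (#|[set v in Cl | Some v != Some p.2]| <= #|Cl :\ p.2|)%N.
      apply: subset_leq_card; apply/subsetP => v; rewrite !inE => /andP[-> h].
      by rewrite andbT; apply: contra h => /eqP ->.
    have h3 := cardsD1 p.2 Cl; rewrite (hallF p hp) in h3.
    lia.
have hPlt : (#|Pdr dr| < #|(('I_n * V)%type : finType)|)%N.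
  rewrite cardP hA; lia.
have [x [[a ha] hx]] := @exists_kernel R _ _ (Pdr dr) fcoef hPlt.
have hz : forall q, q \notin F -> x q = 0.
  move=> q hq; have := hx (inr q) hq; rewrite /= (bigD1 q) //= eqxx mul1r.
  rewrite big1 ?addr0 // => p /negbTE ->; by rewrite mul0r.
have hrows : forall i, \sum_(v : V) x (i, v) = 0.
  move=> i; case: (boolP (i \in Rw)) => hi.
  - have := hx (inl (inl i)) hi; rewrite /= sum_pair /=.
    under eq_bigr do rewrite -mulr_sumr.
    by rewrite sum_delta.
  - apply: big1 => v _; apply: hz; apply: contra hi => h.
    by rewrite inE; apply/existsP; exists v.
have hcolsx : forall v, v \in Cl -> Some v != dr -> dsum x v = 0.
  move=> v hv hd.
  have hin : (inl (inr v) : ('I_n + V + ('I_n * V))%type) \in Pdr dr.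
    by rewrite unfold_in /= hv hd.
  have := hx _ hin.
  rewrite sum_pair /=; under eq_bigr do rewrite sum_delta; by [].
have hcol0 : forall v, v \notin Cl -> cs z v \is a Num.int -> dsum x v = 0.
  move=> v hv hint; apply: big1 => i _; apply: hz; apply: contra hv => h.
  by rewrite inE hint; apply/existsP; exists i.
exists x; split => //; last by exists a.
move=> v hint; case: (boolP (v \in Cl)) => hv; last exact: hcol0.
case: (eqVneq (Some v) dr) => hd; last exact: hcolsx.
have hallF := hdrop v hd.
have htot : \sum_(v' : V) dsum x v' = 0.
  by rewrite /dsum exchange_big /=; apply: big1 => i _; exact: hrows.
move: htot; rewrite (bigD1 v) //= big1 ?addr0 // => v' hv'.
case: (boolP (v' \in Cl)) => hv'C.
  by apply: hcolsx => //; rewrite -hd; apply: contra hv' => /eqP [->].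
apply: big1 => i _; apply: hz; apply: contra hv'C => h; exact: (hallF _ h).
Qed.

Definition cd (d : 'I_n * V -> R) := \sum_(i < n) \sum_(v : V) c i v * d (i, v).

Lemma step z d : feas z -> dir z d -> 0 <= cd d ->
  exists z', [/\ feas z', obj z <= obj z' & (mu z' < mu z)%N].
Proof.
case=> hcol hal hrow hb [hz hr hc [p0 hp0]] hcd.
have hFd : forall p, d p != 0 -> (0 < z p.1 p.2) && (z p.1 p.2 < 1).
  move=> p hp; have : p \in Fs z by apply: contraT => /hz /eqP; rewrite (negbTE hp).
  by rewrite inE.
pose Pe : pred ('I_n * V + V)%type := fun e => match e with
  | inl p => d p != 0
  | inr v => (cs z v \isn't a Num.int) && (0 < dsum d v) end.
pose rat (e : ('I_n * V + V)%type) : R := match e with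
  | inl p => if 0 < d p then (1 - z p.1 p.2) / d p else z p.1 p.2 / (- d p)
  | inr v => ((Num.ceil (cs z v))%:~R - cs z v) / dsum d v end.
have Pe0 : Pe (inl p0) by [].
have [es Pes hmin] := @arg_minP _ R _ (inl p0) Pe rat Pe0.
set t := rat _ in hmin.
have hpos : forall e, Pe e -> 0 < rat e.
  case=> [p|v] /= he.
  - have /andP[h0 h1] := hFd p he.
    case: ifP => hdp; first by rewrite divr_gt0 // subr_gt0.
    rewrite divr_gt0 // oppr_gt0 lt_neqAle he /=; by rewrite leNgt hdp.
  - case/andP: he => hni hD; rewrite divr_gt0 // subr_gt0 lt_neqAle.
    rewrite real_ceil_ge ?num_real // andbT; apply: contra hni => /eqP ->.
    exact: intr_int.
have ht : 0 < t := hpos _ Pes.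
pose z' := fun i v => z i v + t * d (i, v).
have hcs : forall v, cs z' v = cs z v + t * dsum d v.
  by move=> v; rewrite /cs /z' big_split /= -mulr_sumr.
have hcsint : forall v, cs z v \is a Num.int -> cs z' v = cs z v.
  by move=> v hv; rewrite hcs hc // mulr0 addr0.
exists z'; split.
- split.
  + move=> v hv; case: (boolP (cs z v \is a Num.int)) => hint.
      by rewrite -/(cs z' v) hcsint //; exact: hcol.
    rewrite -/(cs z' v) hcs; case: (ltrP 0 (dsum d v)) => hD.
      have hle := hmin (inr v) (introT andP (conj hint hD)).
      rewrite /= ler_pdivlMr // in hle.
      apply: le_trans (_ : (Num.ceil (cs z v))%:~R <= _).
        by rewrite -lerBrDl.
      by rewrite ler_int real_ceil_le_int ?num_real //; exact: hcol.
    apply: le_trans (hcol v hv); rewrite gerDl; exact: mulr_ge0_le0 (ltW ht) hD.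
  + have hint : cs z alpha \is a Num.int by rewrite /cs hal intr_int.
    by rewrite -/(cs z' alpha) hcsint.
  + move=> i; rewrite /z' big_split /= -mulr_sumr hr mulr0 addr0; exact: hrow.
  + move=> i v; rewrite /z'; have /andP[h0 h1] := hb i v.
    case: (ltgtP (d (i, v)) 0) => hd; last by rewrite hd mulr0 addr0 h0 h1.
    * have hle := hmin (inl (i, v)) (ltr0_neq0 hd).
      rewrite /= ltNge (ltW hd) /= ler_pdivlMr ?oppr_gt0 // mulrN in hle.
      have hu : t * d (i, v) < 0 by rewrite pmulr_rlt0.
      move: hle hu; move: (t * d (i, v)) => u hle hu; apply/andP; split; lra.
    * have hle := hmin (inl (i, v)) (lt0r_neq0 hd).
      rewrite /= hd ler_pdivlMr // in hle.
      have hu : 0 < t * d (i, v) by rewrite mulr_gt0.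
      move: hle hu; move: (t * d (i, v)) => u hle hu; apply/andP; split; lra.
- have -> : obj z' = obj z + t * cd d.
    rewrite /obj /cd /z' mulr_sumr -big_split; apply: eq_bigr => i _.
    rewrite mulr_sumr -big_split; apply: eq_bigr => v _.
    by rewrite mulrDr mulrCA.
  by rewrite lerDl mulr_ge0 // ltW.
- have hsubF : Fs z' \subset Fs z.
    apply/subsetP => p; apply: contraTT => hp.
    rewrite inE /z' /= -surjective_pairing (hz p hp) mulr0 addr0.
    by rewrite inE in hp.
  have hsubN : NI z' \subset NI z.
    apply/subsetP => v; rewrite !inE; apply: contra => hint; by rewrite hcsint.
  have hev : (exists2 p, p \in Fs z & p \notin Fs z') \/
             (exists2 v, v \in NI z & v \notin NI z').
    suff : forall e, Pe e -> t = rat e ->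
      (exists2 p, p \in Fs z & p \notin Fs z') \/ (exists2 v, v \in NI z & v \notin NI z').
      by apply; [exact: Pes|].
    case=> [p|v] hPe /= Et.
    - left; exists p; first by rewrite inE; exact: hFd.
      rewrite inE /z' /= -surjective_pairing /frb.
      case: (ltrP 0 (d p)) => hdp.
      + by rewrite Et hdp divfK ?(lt0r_neq0 hdp) // addrC subrK ltxx andbF.
      + have hdp' : (0 < d p) = false by rewrite ltNge hdp.
        rewrite Et hdp' -[_ / _ * _]opprK -mulrN divfK ?oppr_eq0 //.
        by rewrite subrr ltxx.
    - right; exists v; first by rewrite inE; case/andP: hPe.
      case/andP: hPe => _ hD.
      rewrite inE hcs Et divfK ?(lt0r_neq0 hD) // addrC subrK negbK.
      exact: intr_int.
  rewrite /mu; case: hev => [[p h1 h2]|[v h1 h2]].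
  + have h3 : (#|Fs z'| < #|Fs z|)%N.
      by apply: proper_card; apply/properP; split => //; exists p.
    have h4 := subset_leq_card hsubN; lia.
  + have h3 : (#|NI z'| < #|NI z|)%N.
      by apply: proper_card; apply/properP; split => //; exists v.
    have h4 := subset_leq_card hsubF; lia.
Qed.

Lemma round m z : (mu z <= m)%N -> feas z ->
  exists z', [/\ feas z', integral_sol z' & obj z <= obj z'].
Proof.
have base : forall z, feas z -> Fs z = set0 ->
    exists z', [/\ feas z', integral_sol z' & obj z <= obj z'].
  move=> z0 hf h0; exists z0; split => // i v.
  have : (i, v) \notin Fs z0 by rewrite h0 inE.
  rewrite inE => hnf; case: hf => _ _ _ hb; exact: (@nonfrac01 R _ (hb i v) hnf).
elim: m z => [|m IH] z hm hf.
  apply: base => //; apply: cards0_eq; move: hm; rewrite /mu; lia.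
case: (eqVneq (Fs z) set0) => [h0|hne]; first exact: base.
have [d hd] := @dir_exists z hf hne.
have [d' [hd' hcd]] : exists d', dir z d' /\ 0 <= cd d'.
  case: (lerP 0 (cd d)) => hc; first by exists d.
  exists (fun p => - d p); split.
  - case: hd => hz hr hc' [p hp]; split.
    + by move=> p' /hz ->; rewrite oppr0.
    + by move=> i; rewrite sumrN hr oppr0.
    + by move=> v /hc'; rewrite /dsum sumrN => ->; rewrite oppr0.
    + by exists p; rewrite oppr_eq0.
  - rewrite /cd; under eq_bigr do under eq_bigr do rewrite mulrN.
    under eq_bigr do rewrite sumrN.
    by rewrite sumrN oppr_ge0 ltW.
have [z1 [hf1 ho1 hm1]] := @step z d' hf hd' hcd.
have [z2 [hf2 hi2 ho2]] := IH z1 (leq_trans (ltnSE (leq_trans hm1 hm)) (leqnn _)) hf1.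
exists z2; split => //; exact: le_trans ho2.
Qed.

End LP.

Theorem theorem11 (R : realType) (n : nat) (V : finType)
  (psi : 'I_n -> V -> R) (w : V -> V -> R) (alpha : V) (k : int) :
  (0 < n)%N ->
  (exists z : 'I_n -> V -> R, lp_feasible alpha k z) ->
  exists z : 'I_n -> V -> R,
    integral_sol z /\ lp_optimal psi w alpha k z.
Proof.
move=> _ [z0 hz0].
pose c := fun i v => psi i v + w alpha v.
have hround : forall z, lp_feasible alpha k z -> exists z',
    [/\ lp_feasible alpha k z', integral_sol z' &
        lp_objective psi w alpha z <= lp_objective psi w alpha z'].
  move=> z hz; have [z1 [h1 h2 h3]] := @round R n V alpha k c _ z (leqnn _) hz.
  by exists z1; split.
pose toz (b : {ffun ('I_n * V)%type -> bool}) : 'I_n -> V -> R :=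
  fun i v => (b (i, v))%:R.
have tozK : forall z, integral_sol z -> toz [ffun p => z p.1 p.2 == 1] = z.
  move=> z hz; apply: funext => i; apply: funext => v; rewrite /toz ffunE /=.
  by case: (hz i v) => ->; rewrite ?eqxx // eq_sym oner_eq0.
pose Pb : pred {ffun ('I_n * V)%type -> bool} := fun b => `[< lp_feasible alpha k (toz b) >].
have [zi [hfi hii _]] := hround z0 hz0.
have Pb0 : Pb [ffun p => zi p.1 p.2 == 1] by apply/asboolP; rewrite tozK.
have [bs Pbs hmax] := @arg_maxP _ R _ _ Pb (fun b => lp_objective psi w alpha (toz b)) Pb0.
exists (toz bs); split.
  by move=> i v; rewrite /toz; case: (bs (i, v)); [right|left].
split; first exact/asboolP.
move=> z' hz'; have [z'' [hf'' hi'' ho'']] := hround z' hz'.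
apply: le_trans ho'' _; rewrite -(tozK z'' hi'').
apply: hmax; apply/asboolP; by rewrite tozK.
Qed.
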